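(* Fix a monomial order on $S=K[x_1,\ldots,x_n]$ and let $J$ and $E$ be ideals of $S$. The following conditions are equivalent: (a) $\mathrm{in}(J+E)=\mathrm{in}(J)+\mathrm{in}(E)$; (b) for any $\mathcal G_J\in \mathrm{Gr}(J)$ and any $\mathcal G_E\in\mathrm{Gr}(E)$, we have $\mathcal G_J\cup\mathcal G_E\in \mathrm{Gr}(J+E)$; (c) there exist $\mathcal G_J\in \mathrm{Gr}(J)$ and $\mathcal G_E\in\mathrm{Gr}(E)$ such that $\mathcal G_J\cup\mathcal G_E\in \mathrm{Gr}(J+E)$; (d) $\mathrm{in}(J\cap E)=\mathrm{in}(J)\cap\mathrm{in}(E)$; (e) for any nonzero $f\in J$ and nonzero $g\in E$ there exists $h\in J\cap E$ with $\mathrm{in}(h)=\mathrm{lcm}(\mathrm{in}(f),\mathrm{in}(g))$; (f) for any $0\neq h\in J+E$ there exist $f\in J$ and $g\in E$ with $h=f-g$ and such that either one of $f,g$ is zero, or both are nonzero and $\mathrm{in}(f)\neq \mathrm{in}(g)$.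
   Context: $K$ is a field and $S=K[x_1,\ldots,x_n]$ with a fixed monomial order. For $0\neq f\in S$, $\mathrm{in}(f)$ denotes its leading monomial and $\mathrm{LT}(f)$ its leading term. For an ideal $I\subseteq S$, $\mathrm{in}(I)$ is the ideal generated by $\{\mathrm{in}(f): 0\ne f\in I\}$, and $\mathrm{Gr}(I)$ denotes the set of all Gröbner bases of $I$ with respect to the fixed monomial order. *)

(* Defs.v *)
From HB Require Import structures.
From mathcomp Require Import all_boot all_order all_algebra.
From mathcomp Require Import mpoly.
Set Implicit Arguments. Unset Strict Implicit. Unset Printing Implicit Defensive.
Import Order.TTheory GRing.Theory.
Local Open Scope ring_scope.

Section Defs.
Variables (n : nat) (K : fieldType).

(* A monomial order on the monomials 'X_{1..n} (exponent vectors):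
   a total order, compatible with multiplication (= addition of exponents),
   with 1 (exponent 0) smallest, and well-founded. *)
Definition monomial_order (le : rel 'X_{1..n}) : Prop :=
  [/\ reflexive le, antisymmetric le, transitive le & total le] /\
  [/\ (forall m1 m2 m, le m1 m2 -> le (m1 + m)%MM (m2 + m)%MM),
      (forall m, le 0%MM m) &
      well_founded (fun m1 m2 => le m1 m2 && (m1 != m2))].

(* in(f): the leading monomial of f (the le-largest monomial of its support);
   for f = 0 it is (arbitrarily) the exponent 0 and is never used. *)
Definition lm (le : rel 'X_{1..n}) (f : {mpoly K[n]}) : 'X_{1..n} :=
  foldl (fun acc m => if le acc m then m else acc) (head 0%MM (msupp f)) (msupp f).

Definition ideal (I : {mpoly K[n]} -> Prop) : Prop :=
  [/\ I 0, (forall f g, I f -> I g -> I (f + g)) &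
      (forall r f, I f -> I (r * f))].

Definition ideal_add (I J : {mpoly K[n]} -> Prop) : {mpoly K[n]} -> Prop :=
  fun h => exists f g, [/\ I f, J g & h = f + g].

Definition ideal_cap (I J : {mpoly K[n]} -> Prop) : {mpoly K[n]} -> Prop :=
  fun h => I h /\ J h.

Definition ideal_eq (I J : {mpoly K[n]} -> Prop) : Prop :=
  forall h, I h <-> J h.

Definition ideal_gen (A : {mpoly K[n]} -> Prop) : {mpoly K[n]} -> Prop :=
  fun p => exists s : seq ({mpoly K[n]} * {mpoly K[n]}),
    (forall x, x \in s -> A x.2) /\ p = \sum_(x <- s) x.1 * x.2.

Definition init_ideal (le : rel 'X_{1..n}) (I : {mpoly K[n]} -> Prop)
  : {mpoly K[n]} -> Prop :=
  ideal_gen (fun p => exists f, [/\ I f, f != 0 & p = 'X_[lm le f]]).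

Definition groebner (le : rel 'X_{1..n}) (I : {mpoly K[n]} -> Prop)
  (G : seq {mpoly K[n]}) : Prop :=
  (forall g, g \in G -> I g /\ g != 0) /\
  ideal_eq (init_ideal le I)
           (ideal_gen (fun p => exists2 g, g \in G & p = 'X_[lm le g])).

End Defs.

(* Main.v *)
Require Import Defs.
From HB Require Import structures.
From mathcomp Require Import all_boot all_order all_algebra.
From mathcomp Require Import mpoly.
From Stdlib Require Import Classical.
From mathcomp Require Import ring.
Set Implicit Arguments. Unset Strict Implicit. Unset Printing Implicit Defensive.
Import GRing.Theory.
Local Open Scope ring_scope.

Section LM.
Variables (n : nat) (K : fieldType) (le : rel 'X_{1..n}).
Hypothesis mo : monomial_order le.

Let leR : forall x, le x x. Proof. by case: mo => [[]]. Qed.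
Let leA : forall x y, le x y && le y x -> x = y. Proof. by case: mo => [[]]. Qed.
Let leT : forall y x z, le x y -> le y z -> le x z. Proof. by case: mo => [[]]. Qed.
Let leTot : forall x y, le x y || le y x. Proof. by case: mo => [[]]. Qed.
Let leD m1 m2 m : le m1 m2 -> le (m1 + m)%MM (m2 + m)%MM.
Proof. by case: mo => _ [h _ _]; apply: h. Qed.

Let step := fun acc m => if le acc m then m else acc.

Lemma foldl_step_in a s : foldl step a s \in a :: s.
Proof.
elim: s a => [|y s IH] a /=; first by rewrite mem_seq1.
have := IH (step a y); rewrite /step; case: (le a y) => /=.
  by rewrite !inE => /orP [->|->]; rewrite ?orbT.
by rewrite !inE => /orP [->|->]; rewrite ?orbT.
Qed.

Lemma foldl_step_max a s x : x \in a :: s -> le x (foldl step a s).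
Proof.
elim: s a x => [|y s IH] a x /=; first by rewrite mem_seq1 => /eqP ->.
have H := IH (step a y).
have Ha : le a (step a y) /\ le y (step a y).
  rewrite /step; case: ifP => h; first by split.
  split => //; case/orP: (leTot a y) => //; by rewrite h.
case: Ha => Ha1 Ha2.
rewrite inE => /orP [/eqP ->|]; first by apply: (leT Ha1); apply: H; rewrite mem_head.
rewrite inE => /orP [/eqP ->|xs]; first by apply: (leT Ha2); apply: H; rewrite mem_head.
by apply: H; rewrite inE xs orbT.
Qed.

Lemma lm_supp (f : {mpoly K[n]}) : f != 0 -> lm le f \in msupp f.
Proof.
move=> nz; rewrite /lm; case E: (msupp f) => [|a s].
  by move/msuppnil0: E => E; rewrite E eqxx in nz.
have := @foldl_step_in a (a :: s); rewrite /= [in X in X -> _]inE.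
by case/orP => [/eqP ->|//]; rewrite mem_head.
Qed.

Lemma lm_max (f : {mpoly K[n]}) m : m \in msupp f -> le m (lm le f).
Proof.
rewrite /lm; case: (msupp f) => [|a s] //= ms.
by apply: (@foldl_step_max a (a :: s)); rewrite inE ms orbT.
Qed.


Definition ltm' (u v : 'X_{1..n}) := le u v && (u != v).
Local Notation lm := (lm le).
Implicit Types f g p q : {mpoly K[n]}.

Lemma lm_le p u : p != 0 -> (forall m, m \in msupp p -> le m u) -> le (lm p) u.
Proof. by move=> nz H; apply: H; apply: lm_supp. Qed.

Lemma lm_char p u : u \in msupp p -> (forall m, m \in msupp p -> le m u) -> lm p = u.
Proof.
move=> us H; have nz : p != 0.
  by apply/eqP => p0; move: us; rewrite p0 msupp0.
by apply: leA; rewrite (lm_le nz H) lm_max.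
Qed.

Lemma lmZ c p : c != 0 -> lm (c *: p) = lm p.
Proof.
move=> nzc.
have E m : (m \in msupp (c *: p)) = (m \in msupp p).
  by rewrite !mcoeff_msupp mcoeffZ mulf_eq0 negb_or nzc.
have [->|nzp] := eqVneq p 0; first by rewrite scaler0.
by apply: lm_char; rewrite ?E ?lm_supp // => m; rewrite E; apply: lm_max.
Qed.

Lemma lmN p : lm (- p) = lm p.
Proof. by rewrite -scaleN1r lmZ // oppr_eq0 oner_eq0. Qed.

Lemma lmMX p a : p != 0 -> p * 'X_[a] != 0 /\ lm (p * 'X_[a]) = (a + lm p)%MM.
Proof.
move=> nz.
have ins : (a + lm p)%MM \in msupp (p * 'X_[a]).
  by rewrite mcoeff_msupp mcoeffMX -mcoeff_msupp lm_supp.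
split; first by apply/eqP => e; move: ins; rewrite e msupp0.
apply: lm_char => // m; rewrite (perm_mem (msuppMX _ _)) => /mapP [m' m'in ->].
by rewrite ![(a + _)%MM]addmC; apply: leD; apply: lm_max.
Qed.

Lemma lm_add_lt f q : f != 0 -> (q = 0 \/ ltm' (lm q) (lm f)) ->
  f + q != 0 /\ lm (f + q) = lm f.
Proof.
move=> nzf [->|]; first by rewrite addr0.
case/andP => lq neq.
have q0 : q@_(lm f) = 0.
  apply: memN_msupp_eq0; apply/negP => H.
  by move: neq; rewrite (@leA (lm f) (lm q)) ?eqxx // lq lm_max.
have ins : lm f \in msupp (f + q) by rewrite mcoeff_msupp mcoeffD q0 addr0 -mcoeff_msupp lm_supp.
split; first by apply/eqP => e; move: ins; rewrite e msupp0.
apply: lm_char => // m /msuppD_le; rewrite mem_cat => /orP [/lm_max //|/lm_max h].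
exact: leT h lq.
Qed.

Lemma lm_cancel f g u : f != 0 -> lm f = u -> (forall m, m \in msupp g -> le m u) ->
  f@_u = g@_u -> f - g != 0 -> ltm' (lm (f - g)) u.
Proof.
move=> nzf lf Hg cu nz.
have le1 : le (lm (f - g)) u.
  apply: lm_le => // m /msuppB_le; rewrite mem_cat => /orP [/lm_max|/Hg //].
  by rewrite lf.
rewrite /ltm' le1 /=; apply/eqP => e.
by move: (lm_supp nz); rewrite e mcoeff_msupp mcoeffB cu subrr eqxx.
Qed.

Lemma lm_sub_cases f g : f != 0 -> g != 0 -> lm f != lm g ->
  f - g != 0 /\ (lm (f - g) = lm f /\ ltm' (lm g) (lm f) \/
                 lm (f - g) = lm g /\ ltm' (lm f) (lm g)).
Proof.
move=> nzf nzg ne.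
case/orP: (leTot (lm g) (lm f)) => h.
  have lt1 : ltm' (lm (- g)) (lm f) by rewrite lmN /ltm' h eq_sym.
  have [] := lm_add_lt nzf (or_intror lt1) => nz e.
  by split => //; left; split => //; rewrite /ltm' h eq_sym.
have nzg' : - g != 0 by rewrite oppr_eq0.
have lt1 : ltm' (lm f) (lm (- g)) by rewrite lmN /ltm' h.
have [nz e] := lm_add_lt nzg' (or_intror lt1); rewrite addrC in nz e.
by split => //; right; split; [rewrite e lmN | rewrite /ltm' h; rewrite lmN in lt1; case/andP: lt1].
Qed.

Lemma le_refl' a : le a a. Proof. exact: leR. Qed.
Lemma le_lt_trans' a b c : le a b -> ltm' b c -> ltm' a c.
Proof.
move=> ab /andP [bc ne]; rewrite /ltm' (leT ab bc) /=; apply/eqP => e.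
by move: ne; rewrite -e (@leA a b) ?eqxx // ab; rewrite e in bc *.
Qed.
Lemma lt_le_trans' a b c : ltm' a b -> le b c -> ltm' a c.
Proof.
move=> /andP [ab ne] bc; rewrite /ltm' (leT ab bc) /=; apply/eqP => e.
move: ne ab; rewrite e => ne ab.
by move: ne; rewrite (@leA c b) ?eqxx // ab bc.
Qed.
Lemma ltm'_le a b : ltm' a b -> le a b. Proof. by case/andP. Qed.
Lemma ltm'_ne a b : ltm' a b -> a != b. Proof. by case/andP. Qed.
Lemma ltm'_wf : well_founded ltm'.
Proof. by case: mo => _ [_ _ w]. Qed.
Lemma le_total' a b : le a b || le b a. Proof. exact: leTot. Qed.

Definition good f g := [\/ f = 0, g = 0 | [/\ f != 0, g != 0 & lm f != lm g]].

Lemma good_bound f g : good f g -> f - g != 0 ->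
  (f != 0 -> le (lm f) (lm (f - g))) /\ (g != 0 -> le (lm g) (lm (f - g))).
Proof.
case => [->|->|[nzf nzg ne]] nz.
- by split; [rewrite eqxx | move=> _; rewrite sub0r lmN; apply: leR].
- by split; [move=> _; rewrite subr0; apply: leR | rewrite eqxx].
- have [_ [[e l]|[e l]]] := lm_sub_cases nzf nzg ne; rewrite e; split => _ //.
  all: try (by case/andP: l); by apply: leR.
Qed.

End LM.
Section IG.
Variables (n : nat) (K : fieldType).
Implicit Types (B : {mpoly K[n]} -> Prop) (A : 'X_{1..n} -> Prop).

Lemma gen0 B : ideal_gen B 0.
Proof. by exists [::]; rewrite big_nil. Qed.

Lemma genD B p q : ideal_gen B p -> ideal_gen B q -> ideal_gen B (p + q).
Proof.
move=> [s1 [H1 ->]] [s2 [H2 ->]]; exists (s1 ++ s2); rewrite big_cat; split => //.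
by move=> x; rewrite mem_cat => /orP [/H1|/H2].
Qed.

Lemma genM B r p : ideal_gen B p -> ideal_gen B (r * p).
Proof.
move=> [s [H ->]]; exists [seq (r * x.1, x.2) | x <- s]; split.
  by move=> x /mapP [y ys ->] /=; apply: H.
by rewrite big_map mulr_sumr; apply: eq_bigr => x _ /=; rewrite mulrA.
Qed.

Lemma gen_of B p : B p -> ideal_gen B p.
Proof.
by move=> Bp; exists [:: (1, p)]; rewrite big_seq1 mul1r; split => // x; rewrite mem_seq1 => /eqP ->.
Qed.

Lemma gen_ideal B : ideal (ideal_gen B).
Proof. split; [exact: gen0 | exact: genD | exact: genM]. Qed.

Lemma sum_closed (T : eqType) (P : {mpoly K[n]} -> Prop) (s : seq T) (F : T -> {mpoly K[n]}) :
  P 0 -> (forall a b, P a -> P b -> P (a + b)) -> (forall x, x \in s -> P (F x)) ->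
  P (\sum_(x <- s) F x).
Proof.
move=> P0 PD; elim: s => [|x s IH] H; first by rewrite big_nil.
rewrite big_cons; apply: PD; first by apply: H; rewrite mem_head.
by apply: IH => y ys; apply: H; rewrite inE ys orbT.
Qed.

Definition Dv A (m : 'X_{1..n}) := exists u, A u /\ (u <= m)%MM.

Lemma MG1 B A p : (forall q, B q -> exists u, A u /\ q = 'X_[u]) -> ideal_gen B p ->
  forall m, m \in msupp p -> Dv A m.
Proof.
move=> HB [s [Hs ->]]; elim: s Hs => [|x s IH] Hs m; first by rewrite big_nil msupp0.
rewrite big_cons => /msuppD_le; rewrite mem_cat => /orP [|]; last first.
  by apply: IH => y ys; apply: Hs; rewrite inE ys orbT.
have [u [Au e]] := HB _ (Hs _ (mem_head _ _)).
rewrite e (perm_mem (msuppMX _ _)) => /mapP [m' _ ->].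
by exists u; split => //; apply: lem_addr.
Qed.

Lemma MG2 B A p : (forall u, A u -> B 'X_[u]) -> (forall m, m \in msupp p -> Dv A m) ->
  ideal_gen B p.
Proof.
move=> HA HD; rewrite [p]mpolyE; apply: sum_closed; [exact: gen0|exact: genD|].
move=> m /HD [u [Au um]].
rewrite -(submK um) mpolyXD scalerAl; apply: genM.
exact: gen_of (HA _ Au).
Qed.

End IG.

Section Chars.
Variables (n : nat) (K : fieldType).
Implicit Types (B : {mpoly K[n]} -> Prop) (A : 'X_{1..n} -> Prop).

Definition Bmon B A := (forall q, B q -> exists u, A u /\ q = 'X_[u]) /\
                       (forall u, A u -> B 'X_[u]).

Lemma gen_char B A p : Bmon B A -> ideal_gen B p <-> (forall m, m \in msupp p -> Dv A m).
Proof. by case=> H1 H2; split; [apply: MG1 | apply: MG2]. Qed.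

Lemma gen_term B A c m : Bmon B A -> Dv A m -> ideal_gen B (c *: 'X_[m]).
Proof.
move=> HB Dm; rewrite -mul_mpolyC; apply: genM; apply/(gen_char _ HB) => m'.
by rewrite msuppX mem_seq1 => /eqP ->.
Qed.

Lemma gen_X B A m : Bmon B A -> ideal_gen B 'X_[m] <-> Dv A m.
Proof.
move=> HB; rewrite (gen_char _ HB); split; first by apply; rewrite msuppX mem_seq1.
by move=> Dm m'; rewrite msuppX mem_seq1 => /eqP ->.
Qed.

Lemma add_char B1 A1 B2 A2 p : Bmon B1 A1 -> Bmon B2 A2 ->
  ideal_add (ideal_gen B1) (ideal_gen B2) p <->
  (forall m, m \in msupp p -> Dv A1 m \/ Dv A2 m).
Proof.
move=> H1 H2; split.
  move=> [a [b [Ha Hb ->]]] m /msuppD_le; rewrite mem_cat => /orP [ma|mb].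
    by left; move/(gen_char _ H1): Ha; apply.
  by right; move/(gen_char _ H2): Hb; apply.
move=> H; rewrite [p]mpolyE; apply: sum_closed.
- by exists 0, 0; split; rewrite ?addr0 //; apply: gen0.
- move=> a b [a1 [a2 [Ha1 Ha2 ->]]] [b1 [b2 [Hb1 Hb2 ->]]].
  exists (a1 + b1), (a2 + b2); split; try apply: genD => //.
  by rewrite addrACA.
- move=> m /H [D1|D2].
  + exists (p@_m *: 'X_[m]), 0; split; rewrite ?addr0 //; last exact: gen0.
    exact: gen_term H1 D1.
  + exists 0, (p@_m *: 'X_[m]); split; rewrite ?add0r //; first exact: gen0.
    exact: gen_term H2 D2.
Qed.

End Chars.

Section Init.
Variables (n : nat) (K : fieldType) (le : rel 'X_{1..n}).
Hypothesis mo : monomial_order le.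
Implicit Types (I : {mpoly K[n]} -> Prop).
Local Notation lm := (lm le).

Definition MI I u := exists f, [/\ I f, f != 0 & lm f = u].
Definition Binit I := fun p : {mpoly K[n]} => exists f, [/\ I f, f != 0 & p = 'X_[lm f]].
Definition AG (G : seq {mpoly K[n]}) u := exists2 g, g \in G & u = lm g.
Definition BG (G : seq {mpoly K[n]}) (p : {mpoly K[n]}) := exists2 g, g \in G & p = 'X_[lm g].

Lemma Bmon_init I : Bmon (Binit I) (MI I).
Proof.
split; first by move=> q [f [If nz ->]]; exists (lm f); split => //; exists f.
by move=> u [f [If nz <-]]; exists f.
Qed.

Lemma Bmon_G G : Bmon (BG G) (AG G).
Proof.
split; first by move=> q [g gG ->]; exists (lm g); split => //; exists g.
by move=> u [g gG ->]; exists g.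
Qed.

Lemma MI_up I u m : ideal I -> MI I u -> (u <= m)%MM -> MI I m.
Proof.
case=> _ _ IM [f [If nz <-]] um.
have [nz' e] := lmMX mo (m - lm f)%MM nz.
exists (f * 'X_[m - lm f]); split => //; first by rewrite mulrC; apply: IM.
by rewrite e submK.
Qed.

Lemma Dv_MI I m : ideal I -> Dv (MI I) m <-> MI I m.
Proof.
move=> HI; split; first by move=> [u [Mu um]]; apply: MI_up Mu um.
by move=> Mm; exists m; split => //; apply: lepm_refl.
Qed.

Lemma init_char I p : ideal I ->
  init_ideal le I p <-> (forall m, m \in msupp p -> MI I m).
Proof.
move=> HI; rewrite /init_ideal (gen_char _ (Bmon_init I)).
by split => H m /H /(Dv_MI _ HI).
Qed.

Lemma init_X I m : ideal I -> init_ideal le I 'X_[m] <-> MI I m.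
Proof.
move=> HI; rewrite /init_ideal (gen_X _ (Bmon_init I)); exact: Dv_MI.
Qed.

Lemma groeb_char I G : ideal I ->
  groebner le I G <-> (forall g, g \in G -> I g /\ g != 0) /\
                      (forall m, MI I m <-> Dv (AG G) m).
Proof.
move=> HI; split.
  case=> H1 H2; split => // m; rewrite -(init_X _ HI) -(gen_X _ (Bmon_G G)).
  exact: H2.
case=> H1 H2; split => // p; rewrite (init_char _ HI) (gen_char _ (Bmon_G G)).
by split => H m /H /H2.
Qed.

Lemma MI_mono I1 I2 m : (forall f, I1 f -> I2 f) -> MI I1 m -> MI I2 m.
Proof. by move=> H [f [If nz e]]; exists f; split => //; apply: H. Qed.

End Init.

Section Dickson.

Lemma all2_leq_trans (s t u : seq nat) : all2 leq s t -> all2 leq t u -> all2 leq s u.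
Proof.
elim: s t u => [|x s IH] [|y t] [|z u] //= /andP [xy st] /andP [yz tu].
by rewrite (leq_trans xy yz) (IH _ _ st tu).
Qed.

Lemma choose_list (T U : eqType) (L : seq T) (R : T -> U -> Prop) :
  (forall x, x \in L -> exists y, R x y) ->
  exists L' : seq U, (forall y, y \in L' -> exists2 x, x \in L & R x y) /\
                     (forall x, x \in L -> exists2 y, y \in L' & R x y).
Proof.
elim: L => [|x L IH] H; first by exists [::].
have [y Rxy] := H x (mem_head _ _).
have [L' [H1 H2]] : exists L' : seq U, (forall y, y \in L' -> exists2 x, x \in L & R x y) /\
                     (forall x, x \in L -> exists2 y, y \in L' & R x y).
  by apply: IH => z zL; apply: H; rewrite inE zL orbT.
exists (y :: L'); split.
  move=> y'; rewrite inE => /orP [/eqP ->|/H1 [x' x'L R']]; first by exists x; rewrite ?mem_head.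
  by exists x'; rewrite // inE x'L orbT.
move=> x'; rewrite inE => /orP [/eqP ->|/H2 [y' y'L R']]; first by exists y; rewrite ?mem_head.
by exists y'; rewrite // inE y'L orbT.
Qed.

Definition dbasis (P : seq nat -> Prop) (L : seq (seq nat)) :=
  (forall l, l \in L -> P l) /\ (forall s, P s -> exists2 l, l \in L & all2 leq l s).

Lemma dickson_seq k (P : seq nat -> Prop) : (forall s, P s -> size s = k) ->
  exists L, dbasis P L.
Proof.
elim: k P => [|k IH] P HP.
  have [P0|nP0] := classic (P [::]).
    exists [:: [::]]; split; first by move=> l; rewrite mem_seq1 => /eqP ->.
    move=> s Ps; have s0 : s = [::] by move: (HP s Ps); case: (s).
    by exists [::]; rewrite ?mem_head // s0.
  exists [::]; split => // s Ps; exfalso; apply: nP0.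
  have s0 : s = [::] by move: (HP s Ps); case: (s).
  by rewrite -s0.
pose Q t := exists x, P (x :: t).
have [LQ [HQ1 HQ2]] : exists L, dbasis Q L.
  by apply: IH => t [x Px]; move: (HP _ Px) => /= [].
have [X HX] : exists X, forall l, l \in LQ -> exists2 x, (x <= X)%N & P (x :: l).
  have [LW [_ HW]] := @choose_list _ nat LQ (fun l x => P (x :: l)) HQ1.
  exists (\max_(x <- LW) x)%N => l /HW [x xW Px]; exists x => //.
  exact: (@leq_bigmax_seq _ LW xpredT (fun x => x) x xW isT).
have Hi i : exists Li, dbasis (fun t => P (i :: t)) Li.
  by apply: IH => t Pt; move: (HP _ Pt) => /= [].
have HU Y : exists L : seq (seq nat), (forall l, l \in L -> P l) /\
    (forall x t, (x <= Y)%N -> P (x :: t) -> exists2 l, l \in L & all2 leq l (x :: t)).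
  elim: Y => [|Y [L [HL1 HL2]]].
    have [L0 [H01 H02]] := Hi 0%N.
    exists [seq 0%N :: l | l <- L0]; split; first by move=> l /mapP [l' /H01 ? ->].
    move=> x t; rewrite leqn0 => /eqP -> /H02 [l lL ll].
    by exists (0%N :: l); rewrite ?map_f //= leqnn.
  have [L1 [H11 H12]] := Hi Y.+1.
  exists (L ++ [seq Y.+1 :: l | l <- L1]); split.
    by move=> l; rewrite mem_cat => /orP [/HL1 //|/mapP [l' /H11 ? ->]].
  move=> x t; rewrite leq_eqVlt => /orP [/eqP -> /H12 [l lL ll]|].
    by exists (Y.+1 :: l); rewrite ?mem_cat ?map_f ?orbT //= leqnn.
  rewrite ltnS => xY /(HL2 _ _ xY) [l lL ll].
  by exists l; rewrite ?mem_cat ?lL.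
have [L [HL1 HL2]] := HU X.
exists L; split => // s Ps.
case: s Ps (HP _ Ps) => [//|x t] Ps _.
have [xX|Xx] := leqP x X; first exact: HL2.
have [l lL lt] := HQ2 t (ex_intro _ x Ps).
have [x' x'X Px'] := HX l lL.
have [l'' l''L ll] := HL2 _ _ x'X Px'.
exists l'' => //; apply: all2_leq_trans ll _ => /=.
by rewrite lt andbT; apply: leq_trans x'X (ltnW Xx).
Qed.


Lemma all2P' (s t : seq nat) : size s = size t ->
  reflect (forall i, (i < size s)%N -> (nth 0 s i <= nth 0 t i)%N) (all2 leq s t).
Proof.
elim: s t => [|x s IH] [|y t] //=; first by move=> _; constructor.
move=> [e].
apply: (iffP andP) => [[xy /(IH _ e) H] [|i] //= | H].
  by rewrite ltnS; apply: H.
split; first exact: (H 0%N).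
by apply/(IH _ e) => i ilt; apply: (H i.+1).
Qed.

Variable n : nat.
Definition sq (m : 'X_{1..n}) : seq nat := tval (multinom_val m).

Lemma lem_sq (m1 m2 : 'X_{1..n}) : (m1 <= m2)%MM = all2 leq (sq m1) (sq m2).
Proof.
have e : size (sq m1) = size (sq m2) by rewrite /sq !size_tuple.
apply/mnm_lepP/(all2P' e) => H.
  move=> i; rewrite /sq size_tuple => ilt.
  by have := H (Ordinal ilt); rewrite !(mnm_nth 0%N).
by move=> i; rewrite !(mnm_nth 0%N); apply: H; rewrite /sq size_tuple.
Qed.

Lemma dickson_mnm (A : 'X_{1..n} -> Prop) :
  exists L : seq 'X_{1..n}, (forall l, l \in L -> A l) /\
    (forall m, A m -> exists2 l, l \in L & (l <= m)%MM).
Proof.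
pose P s := exists m, A m /\ s = sq m.
have [L [HL1 HL2]] : exists L, dbasis P L.
  by apply: (@dickson_seq n) => s [m [_ ->]]; rewrite /sq size_tuple.
have [LM [H1 H2]] := @choose_list _ 'X_{1..n} L (fun l m => A m /\ l = sq m) HL1.
exists LM; split; first by move=> l /H1 [x _ []].
move=> m Am; have [l lL ll] := HL2 (sq m) (ex_intro _ m (conj Am erefl)).
have [m' m'L [_ e]] := H2 l lL.
by exists m' => //; rewrite lem_sq -e.
Qed.

End Dickson.

Section Main.
Variables (n : nat) (K : fieldType) (le : rel 'X_{1..n}).
Hypothesis mo : monomial_order le.
Variables (J E : {mpoly K[n]} -> Prop).
Hypotheses (hJ : ideal J) (hE : ideal E).
Local Notation lm := (lm le).
Local Notation MI := (MI le).
Local Notation ltm := (ltm' le).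
Implicit Types f g h p : {mpoly K[n]}.

Lemma idN I f : ideal I -> I f -> I (- f).
Proof. by case=> _ _ IM If; rewrite -mulN1r; apply: IM. Qed.
Lemma idB I f g : ideal I -> I f -> I g -> I (f - g).
Proof. by move=> HI If Ig; case: (HI) => _ ID _; apply: ID => //; apply: idN. Qed.
Lemma idZ I c f : ideal I -> I f -> I (c *: f).
Proof. by case=> _ _ IM If; rewrite -mul_mpolyC; apply: IM. Qed.

Lemma add_ideal : ideal (ideal_add J E).
Proof.
case: hJ => J0 JD JM; case: hE => E0 ED EM; split.
- by exists 0, 0; rewrite addr0.
- move=> f g [a [b [Ja Eb ->]]] [c [d [Jc Ed ->]]].
  by exists (a + c), (b + d); split; [apply: JD|apply: ED|rewrite addrACA].
- move=> r f [a [b [Ja Eb ->]]].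
  by exists (r * a), (r * b); split; [apply: JM|apply: EM|rewrite mulrDr].
Qed.

Lemma cap_ideal : ideal (ideal_cap J E).
Proof.
case: hJ => J0 JD JM; case: hE => E0 ED EM; split.
- by split.
- by move=> f g [Jf Ef] [Jg Eg]; split; [apply: JD|apply: ED].
- by move=> r f [Jf Ef]; split; [apply: JM|apply: EM].
Qed.

Lemma J_add f : J f -> ideal_add J E f.
Proof. by move=> Jf; exists f, 0; rewrite addr0; split => //; case: hE. Qed.
Lemma E_add f : E f -> ideal_add J E f.
Proof. by move=> Ef; exists 0, f; rewrite add0r; split => //; case: hJ. Qed.

Definition a' := forall m, MI (ideal_add J E) m -> MI J m \/ MI E m.
Definition d' := forall m, MI J m -> MI E m -> MI (ideal_cap J E) m.

Lemma a_a' : ideal_eq (init_ideal le (ideal_add J E))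
             (ideal_add (init_ideal le J) (init_ideal le E)) <-> a'.
Proof.
have BJ := Bmon_init le J; have BE := Bmon_init le E.
split.
  move=> H m /(init_X mo _ add_ideal) /H /(add_char _ BJ BE) Hm.
  have := Hm m; rewrite msuppX mem_seq1 eqxx => /(_ isT) [/(Dv_MI mo _ hJ)|/(Dv_MI mo _ hE)];
    by [left|right].
move=> Ha p; rewrite (init_char mo _ add_ideal) (add_char _ BJ BE); split.
  move=> H m /H /Ha [/(Dv_MI mo _ hJ)|/(Dv_MI mo _ hE)]; by [left|right].
move=> H m /H [/(Dv_MI mo _ hJ) Hm|/(Dv_MI mo _ hE) Hm].
  exact: MI_mono J_add Hm.
exact: MI_mono E_add Hm.
Qed.

Lemma d_d' : ideal_eq (init_ideal le (ideal_cap J E))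
             (ideal_cap (init_ideal le J) (init_ideal le E)) <-> d'.
Proof.
split.
  move=> H m MJ ME; apply/(init_X mo _ cap_ideal)/H.
  by split; apply/(init_X mo).
move=> Hd p; rewrite (init_char mo _ cap_ideal); split.
  move=> H; split; [apply/(init_char mo _ hJ)|apply/(init_char mo _ hE)] => m /H;
    apply: MI_mono => f; rewrite /ideal_cap; by case.
move=> HC; have [H1 H2] := HC.
move/(init_char mo _ hJ): H1 => H1; move/(init_char mo _ hE): H2 => H2 m mp.
by apply: Hd; [apply: H1|apply: H2].
Qed.

Lemma mlcmmm (m : 'X_{1..n}) : mlcm m m = m.
Proof. by apply/mnmP => i; rewrite mnmE maxnn. Qed.

Lemma e_d' : (forall f g, J f -> f != 0 -> E g -> g != 0 ->
       exists h, [/\ ideal_cap J E h, h != 0 & lm h = mlcm (lm f) (lm g)]) <-> d'.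
Proof.
split.
  move=> H m [f [Jf nzf ef]] [g [Eg nzg eg]].
  have [h [Ch nzh eh]] := H f g Jf nzf Eg nzg.
  by exists h; split => //; rewrite eh ef eg mlcmmm.
move=> Hd f g Jf nzf Eg nzg.
have MJ : MI J (mlcm (lm f) (lm g)).
  by apply: (@MI_up _ _ _ mo J (lm f)) => //; [exists f|apply: lem_mlcml].
have ME : MI E (mlcm (lm f) (lm g)).
  by apply: (@MI_up _ _ _ mo E (lm g)) => //; [exists g|apply: lem_mlcmr].
by have [h [Ch nzh eh]] := Hd _ MJ ME; exists h.
Qed.

End Main.

Section Main2.
Variables (n : nat) (K : fieldType) (le : rel 'X_{1..n}).
Hypothesis mo : monomial_order le.
Variables (J E : {mpoly K[n]} -> Prop).
Hypotheses (hJ : ideal J) (hE : ideal E).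
Local Notation lm := (lm le).
Local Notation MI := (MI le).
Local Notation ltm := (ltm' le).
Implicit Types f g h p : {mpoly K[n]}.

Definition Fprop := forall h, ideal_add J E h -> h != 0 ->
  exists f g, [/\ J f, E g, h = f - g &
    (f = 0 \/ g = 0) \/ [/\ f != 0, g != 0 & lm f != lm g]].

Lemma good_F f g : good le f g ->
  (f = 0 \/ g = 0) \/ [/\ f != 0, g != 0 & lm f != lm g].
Proof. by case=> [?|?|?]; [left; left|left; right|right]. Qed.

Lemma F_good f g : (f = 0 \/ g = 0) \/ [/\ f != 0, g != 0 & lm f != lm g] ->
  good le f g.
Proof. by case=> [[?|?]|?]; [apply: Or31|apply: Or32|apply: Or33]. Qed.

Lemma scale_lead f g : f != 0 -> g != 0 -> lm f = lm g ->
  let c := f@_(lm f) / g@_(lm g) in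
  [/\ c != 0, lm (c *: g) = lm f & (c *: g)@_(lm f) = f@_(lm f)].
Proof.
move=> nzf nzg e c.
have fc : f@_(lm f) != 0 by rewrite -mcoeff_msupp lm_supp.
have gc : g@_(lm g) != 0 by rewrite -mcoeff_msupp lm_supp.
have cnz : c != 0 by rewrite /c mulf_neq0 // invr_eq0.
split => //; first by rewrite lmZ.
by rewrite mcoeffZ /c e -mulrA mulVf // mulr1.
Qed.

Lemma a'_F : a' le J E -> Fprop.
Proof.
move=> Ha h Hh nzh.
suff S : forall u h, ideal_add J E h -> h != 0 -> lm h = u ->
  exists f g, [/\ J f, E g, h = f - g & good le f g].
  by have [f [g [Jf Eg e G]]] := S _ h Hh nzh erefl; exists f, g; split => //; apply: good_F.
clear h Hh nzh.
elim/(well_founded_ind (ltm'_wf mo)) => u IH h Hh nzh lh.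
have := Ha u (ex_intro _ h (And3 Hh nzh lh)).
case=> [[f0 [Jf0 nzf0 lf0]]|[g0 [Eg0 nzg0 lg0]]].
- have e : lm h = lm f0 by rewrite lh lf0.
  have [cnz lf1 cf1] := scale_lead nzh nzf0 e.
  set f1 := _ *: f0 in lf1 cf1.
  have Jf1 : J f1 by apply: idZ.
  have nzf1 : f1 != 0 by rewrite scaler_eq0 negb_or cnz.
  have [h1z|nzh1] := eqVneq (h - f1) 0.
    exists f1, 0; split => //; first by case: hE.
      by rewrite subr0; apply/eqP; rewrite -subr_eq0 h1z.
    by apply: Or32.
  have lt1 : ltm (lm (h - f1)) u.
    rewrite -lh; apply: lm_cancel => //.
    by move=> m /(lm_max mo); rewrite lf1.
  have Hh1 : ideal_add J E (h - f1) by apply: idB => //; [apply: add_ideal|apply: J_add].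
  have [f2 [g2 [Jf2 Eg2 e2 G2]]] := IH _ lt1 _ Hh1 nzh1 erefl.
  have nzh1' : f2 - g2 != 0 by rewrite -e2.
  have [B1 B2] := good_bound mo G2 nzh1'.
  rewrite -e2 in B1 B2.
  have [nz12 l12] : f1 + f2 != 0 /\ lm (f1 + f2) = lm f1.
    apply: (lm_add_lt mo nzf1).
    have [->|nzf2] := eqVneq f2 0; first by left.
    by right; rewrite lf1; apply: (le_lt_trans' mo (B1 nzf2)); rewrite lh.
  exists (f1 + f2), g2; split => //.
  + by case: hJ => _ JD _; apply: JD.
  + by rewrite -addrA -e2 addrC subrK.
  + have [->|nzg2] := eqVneq g2 0; first by apply: Or32.
    apply: Or33; split => //; rewrite l12 lf1 lh eq_sym.
    by have := le_lt_trans' mo (B2 nzg2) lt1; rewrite /ltm' => /andP [].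
- have e : lm h = lm g0 by rewrite lh lg0.
  have [cnz lg1 cg1] := scale_lead nzh nzg0 e.
  set g1 := _ *: g0 in lg1 cg1.
  have Eg1 : E g1 by apply: idZ.
  have nzg1 : g1 != 0 by rewrite scaler_eq0 negb_or cnz.
  have [h1z|nzh1] := eqVneq (h - g1) 0.
    exists 0, (- g1); split => //; first by case: hJ.
      by apply: idN.
      by rewrite sub0r opprK; apply/eqP; rewrite -subr_eq0 h1z.
    by apply: Or31.
  have lt1 : ltm (lm (h - g1)) u.
    rewrite -lh; apply: lm_cancel => //.
    by move=> m /(lm_max mo); rewrite lg1.
  have Hh1 : ideal_add J E (h - g1) by apply: idB => //; [apply: add_ideal|apply: E_add].
  have [f2 [g2 [Jf2 Eg2 e2 G2]]] := IH _ lt1 _ Hh1 nzh1 erefl.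
  have nzh1' : f2 - g2 != 0 by rewrite -e2.
  have [B1 B2] := good_bound mo G2 nzh1'.
  rewrite -e2 in B1 B2.
  have nzg1' : - g1 != 0 by rewrite oppr_eq0.
  have [nz12 l12] : - g1 + g2 != 0 /\ lm (- g1 + g2) = lm (- g1).
    apply: (lm_add_lt mo nzg1').
    have [->|nzg2] := eqVneq g2 0; first by left.
    by right; rewrite (lmN mo) lg1; apply: (le_lt_trans' mo (B2 nzg2)); rewrite lh.
  exists f2, (- g1 + g2); split => //.
  + by case: hE => _ ED _; apply: ED => //; apply: idN.
  + by rewrite opprD opprK addrCA -e2 addrC subrK.
  + have [->|nzf2] := eqVneq f2 0; first by apply: Or31.
    apply: Or33; split => //; rewrite l12 (lmN mo) lg1 lh.
    by have := le_lt_trans' mo (B1 nzf2) lt1; rewrite /ltm' => /andP [].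
Qed.


Lemma F_a' : Fprop -> a' le J E.
Proof.
move=> HF m [h [Hh nzh lh]].
have [f [g [Jf Eg e G]]] := HF h Hh nzh.
case: G => [[f0|g0]|[nzf nzg ne]].
- right; exists (- h); split; first by move: Eg; rewrite e f0 sub0r opprK.
  by rewrite oppr_eq0. by rewrite (lmN mo).
- by left; exists h; split => //; rewrite e g0 subr0.
- have [_ [[l _]|[l _]]] := lm_sub_cases mo nzf nzg ne.
    by left; exists f; split => //; rewrite -l -e.
  by right; exists g; split => //; rewrite -l -e.
Qed.

Lemma d'_F : d' le J E -> Fprop.
Proof.
move=> Hd h [f0 [g0 [Jf0 Eg0 eh]]] nzh.
suff S : forall u f g, J f -> E g -> h = f - g -> (f != 0 -> le (lm f) u) ->
    (g != 0 -> le (lm g) u) ->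
    exists f g, [/\ J f, E g, h = f - g & good le f g].
  set u0 := if le (lm (- g0)) (lm f0) then lm f0 else lm (- g0).
  have e0 : h = f0 - - g0 by rewrite opprK.
  have B1 : f0 != 0 -> le (lm f0) u0.
    move=> _; rewrite /u0; case: ifP => h1; first exact: (le_refl' mo _).
    by case/orP: (le_total' mo (lm (- g0)) (lm f0)); rewrite ?h1.
  have B2 : - g0 != 0 -> le (lm (- g0)) u0.
    by move=> _; rewrite /u0; case: ifP => h1 //; apply: (le_refl' mo _).
  have [f [g [Jf Eg e G]]] := S u0 f0 (- g0) Jf0 (idN hE Eg0) e0 B1 B2.
  by exists f, g; split => //; apply: good_F.
elim/(well_founded_ind (ltm'_wf mo)) => u IH f g Jf Eg e Bf Bg.
have [fz|nzf] := eqVneq f 0; first by exists f, g; split => //; apply: Or31.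
have [gz|nzg] := eqVneq g 0; first by exists f, g; split => //; apply: Or32.
have [ne|eq] := boolP (lm f != lm g); first by exists f, g; split => //; apply: Or33.
move/negPn/eqP: eq => eq.
have [k [[Jk Ek] nzk lk]] := Hd (lm f) (ex_intro _ f (And3 Jf nzf erefl))
  (ex_intro _ g (And3 Eg nzg (esym eq))).
have [cnz lk1 ck1] := scale_lead nzf nzk (esym lk).
set k1 := _ *: k in lk1 ck1.
have Jk1 : J k1 by apply: idZ.
have Ek1 : E k1 by apply: idZ.
have Jf' : J (f - k1) by apply: idB.
have Eg' : E (g - k1) by apply: idB.
have e' : h = (f - k1) - (g - k1) by rewrite e opprB addrA subrK.
have [f'z|nzf'] := eqVneq (f - k1) 0.
  by exists (f - k1), (g - k1); split => //; apply: Or31.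
have [g'z|nzg'] := eqVneq (g - k1) 0.
  by exists (f - k1), (g - k1); split => //; apply: Or32.
have [ne'|eq'] := boolP (lm (f - k1) != lm (g - k1)).
  by exists (f - k1), (g - k1); split => //; apply: Or33.
move/negPn/eqP: eq' => eq'.
have lt1 : ltm (lm (f - k1)) (lm f).
  apply: (lm_cancel mo nzf erefl).
  - by move=> m /(lm_max mo); rewrite lk1.
  - by rewrite ck1.
  - by [].
apply: (IH (lm (f - k1))).
- by apply: (lt_le_trans' mo lt1); apply: Bf.
- exact: Jf'.
- exact: Eg'.
- exact: e'.
- by move=> _; apply: (le_refl' mo _).
- by move=> _; rewrite eq'; apply: (le_refl' mo _).
Qed.

Lemma F_d' : Fprop -> d' le J E.
Proof.
move=> HF m [f [Jf nzf lf]] [g [Eg nzg lg]].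
have e : lm f = lm g by rewrite lf lg.
have [cnz lg1 cg1] := scale_lead nzf nzg e.
set g1 := _ *: g in lg1 cg1.
have Eg1 : E g1 by apply: idZ.
have Hh : ideal_add J E (f - g1).
  by exists f, (- g1); split => //; apply: idN.
have [hz|nzh] := eqVneq (f - g1) 0.
  have fg : f = g1 by apply/eqP; rewrite -subr_eq0 hz.
  by exists f; split => //; split => //; rewrite fg.
have lt1 : ltm (lm (f - g1)) (lm f).
  apply: (lm_cancel mo nzf erefl).
  - by move=> m' /(lm_max mo); rewrite lg1.
  - by rewrite cg1.
  - by [].
have [f2 [g2 [Jf2 Eg2 e2 G2]]] := HF _ Hh nzh.
have nzh' : f2 - g2 != 0 by rewrite -e2.
have [B1 _] := good_bound mo (F_good G2) nzh'.
rewrite -e2 in B1.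
have [nzk lk] : f + - f2 != 0 /\ lm (f + - f2) = lm f.
  apply: (lm_add_lt mo nzf).
  have [->|nzf2] := eqVneq f2 0; first by left; rewrite oppr0.
  by right; rewrite (lmN mo); apply: (le_lt_trans' mo (B1 nzf2)).
exists (f - f2); split => //; last by rewrite lk.
split; first by apply: idB.
have -> : f - f2 = g1 - g2.
  have -> : f2 = f - g1 + g2 by rewrite e2 subrK.
  ring.
exact: idB.
Qed.

End Main2.

Section Main3.
Variables (n : nat) (K : fieldType) (le : rel 'X_{1..n}).
Hypothesis mo : monomial_order le.
Implicit Types (I : {mpoly K[n]} -> Prop) (G : seq {mpoly K[n]}).
Local Notation lm := (lm le).
Local Notation MI := (MI le).

Lemma groeb_exists I : ideal I -> exists G, groebner le I G.
Proof.
move=> HI.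
have [L [HL1 HL2]] := dickson_mnm (MI I).
have [G [HG1 HG2]] := @choose_list _ _ L
  (fun u g => [/\ I g, g != 0 & lm g = u]) HL1.
exists G; apply/(groeb_char mo _ HI); split.
  by move=> g /HG1 [u _ [Ig nz _]].
move=> m; split.
  move=> /HL2 [l lL lm_]; have [g gG [_ _ e]] := HG2 l lL.
  by exists l; split => //; exists g.
move=> [u [[g gG ->] um]]; have [u' _ [Ig nz e]] := HG1 g gG.
by apply: (MI_up mo HI _ um); exists g.
Qed.

Lemma AG_catl G1 G2 u : AG le G1 u -> AG le (G1 ++ G2) u.
Proof. by case=> g gG ->; exists g; rewrite ?mem_cat ?gG. Qed.
Lemma AG_catr G1 G2 u : AG le G2 u -> AG le (G1 ++ G2) u.
Proof. by case=> g gG ->; exists g; rewrite ?mem_cat ?gG ?orbT. Qed.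

Variables (J E : {mpoly K[n]} -> Prop).
Hypotheses (hJ : ideal J) (hE : ideal E).

Lemma a'_b : a' le J E -> forall GJ GE, groebner le J GJ -> groebner le E GE ->
  groebner le (ideal_add J E) (GJ ++ GE).
Proof.
move=> Ha GJ GE /(groeb_char mo _ hJ) [GJ1 GJ2] /(groeb_char mo _ hE) [GE1 GE2].
apply/(groeb_char mo _ (add_ideal hJ hE)); split.
  move=> g; rewrite mem_cat => /orP [/GJ1 [Jg nz]|/GE1 [Eg nz]]; split => //.
    exact: J_add.
  exact: E_add.
move=> m; split.
  move=> /Ha [/GJ2 [u [Au um]]|/GE2 [u [Au um]]]; exists u; split => //.
    exact: AG_catl.
  exact: AG_catr.
move=> [u [[g] ]]; rewrite mem_cat => /orP [gG|gG] eu um.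
  apply: (MI_mono (I1 := J)); first by move=> f; apply: J_add.
  by apply/GJ2; exists u; split => //; exists g.
apply: (MI_mono (I1 := E)); first by move=> f; apply: E_add.
by apply/GE2; exists u; split => //; exists g.
Qed.

Lemma c_a' : (exists GJ GE, [/\ groebner le J GJ, groebner le E GE &
       groebner le (ideal_add J E) (GJ ++ GE)]) -> a' le J E.
Proof.
move=> [GJ [GE [/(groeb_char mo _ hJ) [_ GJ2] /(groeb_char mo _ hE) [_ GE2]
  /(groeb_char mo _ (add_ideal hJ hE)) [_ G2]]]] m /G2 [u [[g] ]].
rewrite mem_cat => /orP [gG|gG] eu um.
  by left; apply/GJ2; exists u; split => //; exists g.
by right; apply/GE2; exists u; split => //; exists g.
Qed.

End Main3.

Unset Implicit Arguments.
Theorem theorem1p1 (n : nat) (K : fieldType) (le : rel 'X_{1..n})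
  (J E : {mpoly K[n]} -> Prop) :
  monomial_order le -> ideal J -> ideal E ->
  [<->
    (* (a) *)
    ideal_eq (init_ideal le (ideal_add J E))
             (ideal_add (init_ideal le J) (init_ideal le E));
    (* (b) *)
    (forall GJ GE, groebner le J GJ -> groebner le E GE ->
       groebner le (ideal_add J E) (GJ ++ GE));
    (* (c) *)
    (exists GJ GE, [/\ groebner le J GJ, groebner le E GE &
       groebner le (ideal_add J E) (GJ ++ GE)]);
    (* (d) *)
    ideal_eq (init_ideal le (ideal_cap J E))
             (ideal_cap (init_ideal le J) (init_ideal le E));
    (* (e) *)
    (forall f g, J f -> f != 0 -> E g -> g != 0 ->
       exists h, [/\ ideal_cap J E h, h != 0 &
                     lm le h = mlcm (lm le f) (lm le g)]);
    (* (f) *)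
    (forall h, ideal_add J E h -> h != 0 ->
       exists f g, [/\ J f, E g, h = f - g &
         (f = 0 \/ g = 0) \/ [/\ f != 0, g != 0 & lm le f != lm le g]])].
Proof.
move=> mo hJ hE; tfae.
- by move/(a_a' mo hJ hE); apply: a'_b.
- move=> Hb; have [GJ HJ] := groeb_exists mo hJ; have [GE HE] := groeb_exists mo hE.
  by exists GJ, GE; split => //; apply: Hb.
- move=> Hc; apply/(d_d' mo hJ hE); apply: (F_d' mo hJ hE).
  by apply: (a'_F mo hJ hE); apply: c_a' Hc.
- by move/(d_d' mo hJ hE)/(e_d' mo hJ hE).
- by move/(e_d' mo hJ hE); apply: (d'_F mo hJ hE).
- by move/(F_a' mo)/(a_a' mo hJ hE).
Qed.
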